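(* Let $l,t,s,n$ be integers with $t\geq l$, $s\geq l+1\geq 3$ and $n\geq 2\binom{3s}{2}$. Then for every integer $x$ with $1\leq x\leq l-1$, $$ex(n,\{K_{l,t},M_{s+1}\},x)\leq (l-1)n+ex(2(s-l+1)+1,K_{l,t})-\frac{l(l-1)}{2}.$$
   Context: All graphs are finite and simple. $ex(m,K_{l,t})$ is the maximum number of edges of an $m$-vertex graph with no copy of the complete bipartite graph $K_{l,t}$; $M_{s+1}$ is the matching of $s+1$ disjoint edges. For a graph $G$ with matching number at most $s$, say $X\subseteq V(G)$ is admissible if $|X|+\sum_{i=1}^m\lfloor |V(C_i)|/2\rfloor\leq s$, where $C_1,\dots,C_m$ are the components of $G-X$; let $x(G)$ be the maximum size of an admissible set. Let $\mathscr{G}_x$ be the set of graphs on $n$ vertices containing neither $K_{l,t}$ nor $M_{s+1}$ as a subgraph and with $x(G)=x$, and $ex(n,\{K_{l,t},M_{s+1}\},x)=\max_{G\in\mathscr{G}_x}e(G)$. *)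

(* Defs.v *)
From mathcomp Require Import all_boot all_order all_algebra.
Set Implicit Arguments. Unset Strict Implicit. Unset Printing Implicit Defensive.

(* A graph on a finite vertex type T is given by its adjacency function
   g : {ffun T * T -> bool}; it is simple when g is symmetric and irreflexive. *)
Definition adj (T : finType) (g : {ffun T * T -> bool}) (u v : T) : bool := g (u, v).

Definition simple_graph (T : finType) (g : {ffun T * T -> bool}) : bool :=
  [forall u, ~~ adj g u u] && [forall u, forall v, adj g u v == adj g v u].

Definition nedges (T : finType) (g : {ffun T * T -> bool}) : nat :=
  #|[set p : T * T | adj g p.1 p.2 & enum_rank p.1 < enum_rank p.2]|.

Definition has_Klt (T : finType) (g : {ffun T * T -> bool}) (l t : nat) : bool :=
  [exists A : {set T}, exists B : {set T}, [&& #|A| == l, #|B| == t, [disjoint A & B] &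
    [forall a in A, forall b in B, adj g a b]]].

Definition has_matching (T : finType) (g : {ffun T * T -> bool}) (k : nat) : bool :=
  [exists M : {set T * T}, [&& #|M| == k,
    [forall e in M, adj g e.1 e.2] &
    [forall e in M, forall f in M, (e != f) ==>
      [disjoint [set e.1; e.2] & [set f.1; f.2]]]]].

Definition comps (T : finType) (g : {ffun T * T -> bool}) (X : {set T}) : {set {set T}} :=
  equivalence_partition
    (fun u v => connect (fun a b => [&& a \notin X, b \notin X & adj g a b]) u v)
    (~: X).

Definition admissible (T : finType) (g : {ffun T * T -> bool}) (s : nat) (X : {set T}) : bool :=
  #|X| + \sum_(C in comps g X) #|C|./2 <= s.

Definition xG (T : finType) (g : {ffun T * T -> bool}) (s : nat) : nat :=
  \max_(X : {set T} | admissible g s X) #|X|.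

Definition ex_Klt (m l t : nat) : nat :=
  \max_(g : {ffun 'I_m * 'I_m -> bool} | simple_graph g && ~~ has_Klt g l t)
    nedges g.

Definition ex_KM (n l t s x : nat) : nat :=
  \max_(g : {ffun 'I_n * 'I_n -> bool} |
          [&& simple_graph g, ~~ has_Klt g l t, ~~ has_matching g s.+1
            & xG g s == x])
    nedges g.

(* Main.v *)
Require Import Defs.
From mathcomp Require Import all_boot all_order all_algebra.
From mathcomp Require Import zify.
Set Implicit Arguments. Unset Strict Implicit. Unset Printing Implicit Defensive.

Section Glue.
Variables (T : finType) (g : {ffun T * T -> bool}) (X : {set T}).
Hypothesis sg : simple_graph g.

Lemma adj_irr u : adj g u u = false.
Proof. by case/andP: sg => /forallP /(_ u) /negbTE. Qed.

Lemma adj_sym u v : adj g u v = adj g v u.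
Proof. by case/andP: sg => _ /forallP /(_ u) /forallP /(_ v) /eqP. Qed.

Definition eX : rel T := fun a b => [&& a \notin X, b \notin X & adj g a b].

Lemma eX_sym : symmetric eX.
Proof. by move=> a b; rewrite /eX adj_sym andbCA. Qed.

Lemma csym : connect_sym eX.
Proof. exact: sym_connect_sym eX_sym. Qed.

Local Notation rt := (fingraph.root eX).

Lemma connect_X r u : r \in X -> connect eX r u -> u = r.
Proof.
move=> rX /connectP [[|y p] /=]; first by move=> _ ->.
by rewrite /eX rX.
Qed.

Lemma rt_notX u : u \notin X -> rt u \notin X.
Proof.
move=> uX; apply/negP => rX.
have cu : connect eX (rt u) u by rewrite csym connect_root.
have E := connect_X rX cu.
by move: uX; rewrite E rX.
Qed.

Lemma rt_edge u v : eX u v -> rt u = rt v.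
Proof. by move=> e; apply/(fingraph.rootP csym); apply: connect1. Qed.

Definition W := [set w | (w \notin X) && (rt w != w)].

Lemma rt_notW w : w \notin X -> w \notin W -> rt w = w.
Proof. by move=> wX; rewrite inE wX /= negbK => /eqP. Qed.

Lemma cardW : #|W| <= 2 * \sum_(C in comps g X) #|C|./2.
Proof.
set P := comps g X.
have partP : partition P (~: X).
  apply: equivalence_partitionP => u v w _ _ _; split; first exact: connect0.
  move=> Huv; apply/idP/idP => H.
    by apply: connect_trans H; rewrite csym.
  exact: connect_trans Huv H.
case/and3P: partP => /eqP coverP trivP _.
have -> : #|W| = \sum_(x in cover P) (x \in W : nat).
  rewrite coverP -sum1_card big_mkcond /= [RHS]big_mkcond /=.
  apply: eq_bigr => x _; rewrite !inE.
  by case: (x \in X) => //=; case: (rt x != x).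
rewrite (big_trivIset _ trivP) big_distrr /=.
apply: leq_sum => C CP.
case/imsetP: CP => u uD ->.
set C' := [set y in ~: X | connect eX u y].
have rC : rt u \in C'.
  by rewrite !inE rt_notX -?in_setC // connect_root.
rewrite (bigD1 (rt u)) //= inE (root_root csym) eqxx andbF /= add0n.
apply: leq_trans (_ : \sum_(i in C' :\ rt u) 1 <= _).
  rewrite [X in _ <= X]big_mkcond /= [X in X <= _]big_mkcond /=.
  apply: leq_sum => i _; rewrite !inE.
  by case: (i \notin X); case: (connect _ _ _); case: (i != rt u); case: (rt i != i).
rewrite sum1_card.
have := cardsD1 (rt u) C'; rewrite rC.
have := odd_double_half #|C'|.
rewrite -muln2. lia.
Qed.


Variable m : nat.
Hypothesis hm : 2 * \sum_(C in comps g X) #|C|./2 < m.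

Definition m0 : 'I_m := Ordinal (leq_ltn_trans (leq0n _) hm).

Definition fv w : nat := if w \in W then (index w (enum W)).+1 else 0.
Definition f w : 'I_m := insubd m0 (fv w).

Lemma fv_lt w : fv w < m.
Proof.
rewrite /fv; case: ifP => wW; last exact: (leq_ltn_trans (leq0n _) hm).
have := cardW; have : index w (enum W) < #|W| by rewrite cardE index_mem mem_enum.
lia.
Qed.

Lemma val_f w : val (f w) = fv w.
Proof. by rewrite /f insubdK //; exact: fv_lt. Qed.

Lemma fv0 w : (fv w == 0) = (w \notin W).
Proof. by rewrite /fv; case: ifP. Qed.

Lemma fW w w' : w \in W -> fv w = fv w' -> w = w'.
Proof.
move=> wW; rewrite /fv wW; case: ifP => // w'W [] E.
by rewrite -(nth_index w (_ : w \in enum W)) ?mem_enum // E nth_index ?mem_enum.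
Qed.

Lemma fA w w' : w \notin X -> w' \notin X -> rt w = rt w' -> fv w = fv w' -> w = w'.
Proof.
move=> wX w'X er ef; case: (boolP (w \in W)) => wW; first exact: fW.
have : fv w' == 0 by rewrite -ef fv0.
rewrite fv0 => w'W.
by rewrite -(rt_notW wX wW) -(rt_notW w'X w'W).
Qed.

Lemma eX_notX u v : eX u v -> (u \notin X) && (v \notin X).
Proof. by case/and3P => -> ->. Qed.

Lemma edge_inj_W u v u' v' : eX u v -> eX u' v' -> fv u = fv u' -> fv v = fv v' ->
  u \in W -> u = u' /\ v = v'.
Proof.
move=> e e' eu ev uW; have uu := fW uW eu; subst u'; split => //.
have /andP [_ vX] := eX_notX e; have /andP [_ v'X] := eX_notX e'.
by apply: fA => //; rewrite -(rt_edge e) (rt_edge e').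
Qed.

Lemma edge_inj u v u' v' : eX u v -> eX u' v' -> fv u = fv u' -> fv v = fv v' ->
  u = u' /\ v = v'.
Proof.
move=> e e' eu ev; case: (boolP (u \in W)) => uW; first exact: edge_inj_W.
case: (boolP (v \in W)) => vW.
  have e1 : eX v u by rewrite eX_sym.
  have e2 : eX v' u' by rewrite eX_sym.
  by have [] := edge_inj_W e1 e2 ev eu vW.
have /andP [uX vX] := eX_notX e.
have uv : u = v.
  apply: fA => //; first exact: rt_edge.
  by move: uW vW; rewrite -!fv0 => /eqP -> /eqP ->.
by move: e; rewrite uv /eX adj_irr !andbF.
Qed.

Definition h : {ffun 'I_m * 'I_m -> bool} :=
  [ffun p => [exists u, exists v, [&& eX u v, f u == p.1 & f v == p.2]]].

Lemma adj_hP i j : reflect (exists u v, [/\ eX u v, f u = i & f v = j]) (adj h i j).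
Proof.
rewrite /adj ffunE /=; apply: (iffP existsP) => [[u /existsP [v /and3P [e /eqP <- /eqP <-]]]|[u [v [e <- <-]]]].
  by exists u, v.
by exists u; apply/existsP; exists v; rewrite e !eqxx.
Qed.

Lemma ff u u' : (f u == f u') = (fv u == fv u').
Proof. by rewrite -!val_f. Qed.

Lemma h_simple : simple_graph h.
Proof.
apply/andP; split.
  apply/forallP => i; apply/negP => /adj_hP [u [v [e fu fv']]].
  have /andP [uX vX] := eX_notX e.
  have uv : u = v by apply: fA => //; [exact: rt_edge | apply/eqP; rewrite -ff fu fv'].
  by move: e; rewrite uv /eX adj_irr !andbF.
apply/forallP => i; apply/forallP => j; apply/eqP; apply/idP/idP => /adj_hP [u [v [e <- <-]]];
  by apply/adj_hP; exists v, u; rewrite eX_sym.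
Qed.

Lemma count_h : #|[set p | eX p.1 p.2]| <= #|[set q | adj h q.1 q.2]|.
Proof.
set E := [set p | eX p.1 p.2].
rewrite -(@card_in_imset _ _ (fun p => (f p.1, f p.2)) E).
  apply: subset_leq_card; apply/subsetP => q /imsetP [p e ->]; move: e; rewrite /E inE => e.
  by rewrite ?inE /=; apply/adj_hP; exists p.1, p.2.
move=> [u v] [u' v']; rewrite /E !inE /= => e e' [] /eqP; rewrite ff => /eqP eu /eqP; rewrite ff => /eqP ev.
by have [-> ->] := edge_inj e e' eu ev.
Qed.


Lemma nzW u : f u != m0 -> u \in W.
Proof.
move=> H; rewrite -[_ \in _]negbK -fv0 -val_f; apply: contra H => /eqP H.
by apply/eqP/val_inj; rewrite H.
Qed.

Lemma h_noKlt l t : 1 < l -> 1 < t -> ~~ has_Klt g l t -> ~~ has_Klt h l t.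
Proof.
move=> hl ht; apply: contra => /existsP [A /existsP [B /and4P [/eqP cA /eqP cB dAB adjAB]]].
have hAB : forall a b, a \in A -> b \in B -> adj h a b.
  move=> a b aA bB; move/forallP: adjAB => /(_ a); rewrite aA /= => /forallP /(_ b).
  by rewrite bB.
have [a1 a1n a1A] : exists2 a, a != m0 & a \in A.
  have : 0 < #|A :\ m0| by have := cardsD1 m0 A; lia.
  by case/card_gt0P => a; rewrite in_setD1 => /andP [? ?]; exists a.
have [b1 b1n b1B] : exists2 b, b != m0 & b \in B.
  have : 0 < #|B :\ m0| by have := cardsD1 m0 B; lia.
  by case/card_gt0P => a; rewrite in_setD1 => /andP [? ?]; exists a.
have [u1 [v1 [e1 fu1 fv1]]] := adj_hP _ _ (hAB _ _ a1A b1B).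
have u1W : u1 \in W by apply: nzW; rewrite fu1.
have v1W : v1 \in W by apply: nzW; rewrite fv1.
set c := rt u1.
have injW : forall w w', w \in W -> f w = f w' -> w = w'.
  by move=> w w' wW /eqP; rewrite ff => /eqP; apply: fW.
have cl : forall a b u v, a \in A -> b \in B -> eX u v -> f u = a -> f v = b -> rt u = c.
  move=> a b u v aA bB e fu fvv.
  case: (boolP (a == m0)) => [/eqP a0 | an].
    have bn : b != m0.
      apply: contraTneq bB => ->; rewrite -a0.
      by rewrite (disjointFr dAB).
    have [u2 [v2 [e2 fu2 fv2]]] := adj_hP _ _ (hAB _ _ a1A bB).
    have vv : v = v2 by apply: injW; [apply: nzW; rewrite fvv | rewrite fvv fv2].
    have uu : u1 = u2 by apply: injW => //; rewrite fu1 fu2.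
    by rewrite (rt_edge e) vv -(rt_edge e2) -uu.
  have [u2 [v2 [e2 fu2 fv2]]] := adj_hP _ _ (hAB _ _ aA b1B).
  have uu : u = u2 by apply: injW; [apply: nzW; rewrite fu | rewrite fu fu2].
  have vv : v1 = v2 by apply: injW => //; rewrite fv1 fv2.
  by rewrite uu (rt_edge e2) -vv -(rt_edge e1).
pose Q i := fun w => (w \notin X) && (rt w == c) && (f w == i).
pose psi i := odflt u1 [pick w | Q i w].
have psiP : forall i, (exists w, Q i w) -> Q i (psi i).
  move=> i [w Qw]; rewrite /psi; case: pickP => [w' //|/(_ w)].
  by rewrite Qw.
have QA : forall a, a \in A -> Q a (psi a).
  move=> a aA; apply: psiP.
  have [u [v [e fu fvv]]] := adj_hP _ _ (hAB _ _ aA b1B).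
  exists u; rewrite /Q; have /andP [-> _] := eX_notX e.
  by rewrite (cl _ _ _ _ aA b1B e fu fvv) fu !eqxx.
have QB : forall b, b \in B -> Q b (psi b).
  move=> b bB; apply: psiP.
  have [u [v [e fu fvv]]] := adj_hP _ _ (hAB _ _ a1A bB).
  exists v; rewrite /Q; have /andP [_ ->] := eX_notX e.
  by rewrite -(rt_edge e) (cl _ _ _ _ a1A bB e fu fvv) fvv !eqxx.
have psiE : forall i w, Q i (psi i) -> Q i w -> w = psi i.
  move=> i w /andP [/andP [pX /eqP pc] /eqP pf] /andP [/andP [wX /eqP wc] /eqP wf].
  apply: fA => //; first by rewrite pc wc.
  by apply/eqP; rewrite -ff pf wf.
have fpsi : forall i, Q i (psi i) -> f (psi i) = i.
  by move=> i /andP [_ /eqP].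
apply/existsP; exists (psi @: A); apply/existsP; exists (psi @: B).
apply/and4P; split.
- rewrite card_in_imset ?cA //.
  move=> a a' aA a'A E; by rewrite -(fpsi _ (QA _ aA)) E fpsi //; apply: QA.
- rewrite card_in_imset ?cB //.
  move=> a a' aA a'A E; by rewrite -(fpsi _ (QB _ aA)) E fpsi //; apply: QB.
- rewrite -setI_eq0; apply/set0Pn => [[w /setIP [/imsetP [a aA ->] /imsetP [b bB E]]]].
  have ab : a = b by rewrite -(fpsi _ (QA _ aA)) E fpsi //; apply: QB.
  by move: (disjointFr dAB aA); rewrite ab bB.
- apply/forallP => w; apply/implyP => /imsetP [a aA ->].
  apply/forallP => w'; apply/implyP => /imsetP [b bB ->].
  have [u [v [e fu fvv]]] := adj_hP _ _ (hAB _ _ aA bB).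
  have /andP [uX vX] := eX_notX e.
  have ru := cl _ _ _ _ aA bB e fu fvv.
  have rv : rt v = c by rewrite -(rt_edge e).
  have -> : psi a = u by symmetry; apply: psiE; [exact: QA | rewrite /Q uX ru fu !eqxx].
  have -> : psi b = v by symmetry; apply: psiE; [exact: QB | rewrite /Q vX rv fvv !eqxx].
  by case/and3P: e.
Qed.

End Glue.


Lemma twice_nedges (T : finType) (g : {ffun T * T -> bool}) :
  simple_graph g -> 2 * nedges g = #|[set p | adj g p.1 p.2]|.
Proof.
move=> sg.
set E := [set p : T * T | adj g p.1 p.2 & enum_rank p.1 < enum_rank p.2].
set sw := fun p : T * T => (p.2, p.1).
have swK : involutive sw by case.
have -> : [set p | adj g p.1 p.2] = E :|: sw @: E.
  apply/setP => -[u v]; rewrite !inE /=; apply/idP/idP.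
    move=> a; case: (ltngtP (enum_rank u) (enum_rank v)) => H.
    - by rewrite a.
    - apply/orP; right; apply/imsetP; exists (v, u) => //.
      by rewrite inE /= adj_sym // a.
    - by move: a; rewrite (enum_rank_inj (val_inj H)) adj_irr.
  case/orP => [/andP [] //|/imsetP [[a b]]]; rewrite inE /= => /andP [ab _] [-> ->].
  by rewrite adj_sym.
rewrite cardsU card_imset; last exact: (can_inj swK).
have -> : E :&: sw @: E = set0.
  apply/setP => -[u v]; rewrite !inE /=; apply/negP => /andP [/andP [_ H1] /imsetP [[a b]]].
  rewrite inE /= => /andP [_ H2] [E1 E2]; subst; lia.
rewrite cards0 /nedges -/E; lia.
Qed.

Lemma offdiag (T : finType) (S : {set T}) :
  #|[set p in setX S S | p.1 != p.2]| = #|S| * #|S| - #|S|.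
Proof.
have := cardsID [set p : T * T | p.1 == p.2] (setX S S).
have -> : setX S S :\: [set p : T * T | p.1 == p.2] = [set p in setX S S | p.1 != p.2].
  by apply/setP => p; rewrite !inE andbC.
have -> : #|setX S S :&: [set p : T * T | p.1 == p.2]| = #|S|.
  rewrite -(@card_in_imset _ _ (fun u => (u, u)) S); last by move=> ? ? _ _ [].
  apply: eq_card => -[u v]; rewrite !inE /=; apply/idP/imsetP.
    by case/andP => /andP [uS _] /eqP <-; exists u.
  by case=> w wS [-> ->]; rewrite wS eqxx.
rewrite cardsX; lia.
Qed.


Lemma twoC k : 2 * 'C(k, 2) = k * (k - 1).
Proof. elim: k => // k IH; rewrite binS bin1 mulnDr IH; nia. Qed.

Lemma edge_split (T : finType) (g : {ffun T * T -> bool}) (X : {set T}) :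
  simple_graph g ->
  2 * nedges g <= #|[set p | eX g X p.1 p.2]| + 2 * (#|X| * #|~: X|) + (#|X| * #|X| - #|X|).
Proof.
move=> sg; rewrite twice_nedges //.
set E := [set p | eX g X p.1 p.2].
set O := [set p in setX X X | p.1 != p.2].
have sub : [set p | adj g p.1 p.2] \subset E :|: (setX X (~: X) :|: setX (~: X) X :|: O).
  apply/subsetP => -[u v]; rewrite !inE /= => a.
  case uX: (u \in X); case vX: (v \in X); rewrite /eX uX vX /= ?a ?orbT //.
  by apply/eqP => uv; move: a; rewrite uv adj_irr.
apply: leq_trans (subset_leq_card sub) _.
rewrite !cardsU !cardsX offdiag; lia.
Qed.

Lemma card_adj_le (m : nat) (h : {ffun 'I_m * 'I_m -> bool}) :
  simple_graph h -> #|[set p | adj h p.1 p.2]| <= m * m - m.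
Proof.
move=> sh; have cm : #|[set: 'I_m]| = m by rewrite cardsT card_ord.
apply: leq_trans (_ : _ <= #|[set p in setX [set: 'I_m] [set: 'I_m] | p.1 != p.2]|) _; last by rewrite offdiag cm.
apply: subset_leq_card; apply/subsetP => -[u v]; rewrite !inE /= => a.
by apply/negP => /eqP uv; move: a; rewrite uv adj_irr.
Qed.


Lemma arith1 (l n N E H Nh ex Q : nat) : 2 <= l -> l - 1 <= n ->
  2 * N <= E + 2 * ((l - 1) * (n - (l - 1))) + ((l - 1) * (l - 1) - (l - 1)) ->
  E <= H -> 2 * Nh = H -> Nh <= ex -> Q * 2 <= l * (l - 1) ->
  N + Q <= (l - 1) * n + ex.
Proof.
move=> hl ln es c1 t1 e1 q.
have id : 2 * ((l - 1) * (n - (l - 1))) + ((l - 1) * (l - 1) - (l - 1)) + l * (l - 1) = 2 * ((l - 1) * n).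
  case: l hl ln {es q} => // l _ ln; rewrite subn1 /=.
  have [d ->] : exists d, n = l + d by exists (n - l); lia.
  rewrite addKn.
  have : l <= l * l by case: l {ln} => // l; rewrite leq_pmulr.
  nia.
lia.
Qed.

Lemma arith2 (l n s x N E H Q ex : nat) : 1 <= x -> x < l - 1 -> l.+1 <= s ->
  3 * s * (3 * s - 1) <= n -> x <= n ->
  2 * N <= E + 2 * (x * (n - x)) + (x * x - x) ->
  E <= H -> H <= (2 * (s - x) + 1) * (2 * (s - x) + 1) - (2 * (s - x) + 1) ->
  Q * 2 <= l * (l - 1) ->
  N + Q <= (l - 1) * n + ex.
Proof.
move=> h1 h2 h3 h4 h5 es c1 a1 q.
have b1 : x * (n - x) + x * x = x * n.
  by rewrite -mulnDr subnK.
set M := 2 * (s - x) + 1.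
have b3 : M * M - M <= (2 * s + 1) * (2 * s).
  have -> : M * M - M = M * (M - 1) by rewrite mulnBr muln1.
  by apply: leq_mul; rewrite /M; lia.
have b4 : l * (l - 1) <= s * s by apply: leq_mul; lia.
have b5 : (x + 1) * n <= (l - 1) * n by rewrite leq_mul2r; apply/orP; right; lia.
have e1 : (2 * s + 1) * (2 * s) = 4 * (s * s) + 2 * s by rewrite mulnDl mul1n mulnA (mulnC 2 s) -(mulnA s 2 2) (mulnC s (2 * 2)) -mulnA; lia.
have e2 : 3 * s * (3 * s - 1) = 9 * (s * s) - 3 * s.
  by rewrite mulnBr muln1 -mulnA (mulnCA s 3) mulnA.
have e3 : 3 * s <= s * s by apply: leq_mul; lia.
have e4 : (x + 1) * n = x * n + n by rewrite mulnDl mul1n.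
clear -es c1 a1 q b1 b3 b4 b5 e1 e2 e3 e4 h4.
lia.
Qed.

Unset Implicit Arguments.
Local Open Scope ring_scope.

Lemma per_graph (l t s n x : nat) (G : {ffun 'I_n * 'I_n -> bool}) :
  (l <= t)%N -> (3 <= l.+1)%N -> (l.+1 <= s)%N -> (2 * 'C(3 * s, 2) <= n)%N ->
  (1 <= x)%N -> (x <= l - 1)%N ->
  simple_graph G -> ~~ has_Klt G l t -> xG G s = x ->
  (nedges G + (l * (l - 1)) %/ 2 <= (l - 1) * n + ex_Klt (2 * (s - l + 1) + 1) l t)%N.
Proof.
move=> hlt hl hs hn hx1 hxl sg nK xg.
have [X adm cX] : exists2 X : {set 'I_n}, admissible G s X & #|X| = x.
  case: (pickP (fun X => admissible G s X && (#|X| == x))) => [X /andP [a /eqP c]|none].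
    by exists X.
  have : (xG G s <= x.-1)%N.
    apply/bigmax_leqP => X a.
    have := none X; rewrite a /= => /negbT nx.
    have : (#|X| <= xG G s)%N by rewrite /xG; apply: leq_bigmax_cond.
    rewrite xg => le; have : (#|X| < x)%N by rewrite ltn_neqAle nx le.
    by move=> lt; rewrite -ltnS (ltn_predK lt).
  rewrite xg; clear -hx1; lia.
have cC : #|~: X| = (n - x)%N.
  have E := cardsC X; rewrite card_ord cX in E; clear -E; lia.
have := edge_split X sg; rewrite cX cC => es.
have xn : (x <= n)%N by rewrite -cX; apply: leq_trans (max_card _) _; rewrite card_ord.
move: adm; rewrite /admissible cX => adm.
have h2C := twoC (3 * s).
have q : ((l * (l - 1)) %/ 2 * 2 <= l * (l - 1))%N by rewrite leq_trunc_div.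
set S := (\sum_(C in comps G X) #|C|./2)%N in adm.
case: (x =P l - 1)%N => [xl | xl].
  have hm : (2 * S < 2 * (s - l + 1) + 1)%N.
    by clear -adm xl hs hl; lia.
  have c1 := count_h sg hm.
  have s1 := h_simple sg hm.
  have l2 : (2 <= l)%N by clear -hl; lia.
  have t2 : (2 <= t)%N by clear -hl hlt; lia.
  have k1 := h_noKlt sg hm l2 t2 nK.
  have e1 : (nedges (h hm) <= ex_Klt (2 * (s - l + 1) + 1) l t)%N.
    by rewrite /ex_Klt; apply: leq_bigmax_cond; rewrite s1 k1.
  have t1 := twice_nedges s1.
  rewrite xl in es xn.
  exact: arith1 l2 xn es c1 t1 e1 q.
have hm : (2 * S < 2 * (s - x) + 1)%N by clear -adm; lia.
have c1 := count_h sg hm.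
have s1 := h_simple sg hm.
have a1 := card_adj_le s1.
have hx : (x < l - 1)%N by clear -xl hxl; lia.
have hn' : (3 * s * (3 * s - 1) <= n)%N by rewrite -h2C.
exact: arith2 hx1 hx hs hn' xn es c1 a1 q.
Qed.

Theorem corollary3p3 (l t s n : nat) :
  (l <= t)%N -> (3 <= l.+1)%N -> (l.+1 <= s)%N -> (2 * 'C(3 * s, 2) <= n)%N ->
  forall x : nat, (1 <= x)%N -> (x <= l - 1)%N ->
  ((ex_KM n l t s x)%:Z <=
     ((l - 1) * n)%:Z + (ex_Klt (2 * (s - l + 1) + 1) l t)%:Z
     - ((l * (l - 1)) %/ 2)%:Z :> int).
Proof.
move=> hlt hl hs hn x hx1 hxl.
have key : (ex_KM n l t s x <= (l - 1) * n + ex_Klt (2 * (s - l + 1) + 1) l t - (l * (l - 1)) %/ 2)%N.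
  apply/bigmax_leqP => G /and4P [sg nK _ /eqP xg].
  have := @per_graph l t s n x G hlt hl hs hn hx1 hxl sg nK xg.
  clear; lia.
have hQ : ((l * (l - 1)) %/ 2 <= (l - 1) * n)%N.
  have h2C := twoC (3 * s).
  have q : ((l * (l - 1)) %/ 2 <= l * (l - 1))%N by apply: leq_div.
  apply: leq_trans q _; rewrite mulnC leq_mul2l; apply/orP; right.
  have : (3 * s <= 3 * s * (3 * s - 1))%N by rewrite leq_pmulr //; clear -hs; lia.
  clear -hn h2C hs; lia.
move: key hQ; clear; lia.
Qed.
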